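(* Let $B\ge1$, let $X$ be a random variable with a unimodal distribution on $G=\{0,\frac1B,\frac2B,\dots,1\}$, let $t\in G$ and $\eta:=\mathbb{E}(X)$. If $\eta\le1/3$, then \[\mathbb{P}(X\ge t)\le\begin{cases}\dfrac{2\eta-t+\frac1B}{t+\frac1B}&\text{if } t\in\bigl(\eta,\min(\tfrac32\eta+\tfrac1{2B},2\eta)\bigr],\\[2mm]\dfrac{\eta}{2t-\frac1B}&\text{if } t\in\bigl(\min(\tfrac32\eta+\tfrac1{2B},2\eta),\tfrac12\bigr],\\[2mm]\dfrac{2\eta(1-t+\frac1B)}{1+\frac1B}&\text{if } t\in(\tfrac12,1].\end{cases}\] Let $d:=-2(\eta-\tfrac12)(6\eta+1)+\frac{2-4\eta}{B}+\frac{(4\eta-1)^2}{B^2}$. If $\eta>1/3$ and $d>0$, then \[\mathbb{P}(X\ge t)\le\begin{cases}\dfrac{2\eta-t+\frac1B}{t+\frac1B}&\text{if } t\in\bigl(\eta,\tfrac12+\tfrac1{4\eta}(1+\tfrac1B-d^{1/2})\bigr],\\[2mm]\dfrac{2\eta(1-t+\frac1B)}{1+\frac1B}&\text{if } t\in\bigl(\tfrac12+\tfrac1{4\eta}(1+\tfrac1B-d^{1/2}),1\bigr].\end{cases}\] Finally, if $\eta>1/3$ and $d\le0$, then $\mathbb{P}(X\ge t)\le\dfrac{2\eta-t+\frac1B}{t+\frac1B}$.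
   Context: A distribution on $G=\{0,\frac1B,\dots,1\}$ with probability mass function $f$ (write $f_i=f(i/B)$) is unimodal if there is $m\in\{0,\dots,B\}$ with $f_0\le f_1\le\dots\le f_m$ and $f_m\ge f_{m+1}\ge\dots\ge f_B$. *)

(* Defs.v *)
From mathcomp Require Import all_boot all_order all_algebra.
Set Implicit Arguments. Unset Strict Implicit. Unset Printing Implicit Defensive.
Import Order.TTheory GRing.Theory Num.Theory.
Local Open Scope ring_scope.

(* A distribution on G = {0, 1/B, ..., 1} is given by its pmf f, with
   f i = P(X = i/B) for i = 0..B (values of f outside 0..B are irrelevant). *)
Definition is_pmf (R : numDomainType) (B : nat) (f : nat -> R) : Prop :=
  (forall i, (i <= B)%N -> 0 <= f i) /\ \sum_(i < B.+1) f i = 1.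

Definition unimodal (R : numDomainType) (B : nat) (f : nat -> R) : Prop :=
  exists m : nat, (m <= B)%N /\
    (forall i, (i < m)%N -> f i <= f i.+1) /\
    (forall i, (m <= i)%N -> (i < B)%N -> f i.+1 <= f i).

Definition mean (R : numFieldType) (B : nat) (f : nat -> R) : R :=
  \sum_(i < B.+1) f i * (i%:R / B%:R).

Definition tail_prob (R : numDomainType) (B : nat) (f : nat -> R) (k : nat) : R :=
  \sum_(i < B.+1 | (k <= i)%N) f i.

(* Main.v *)
Require Import Defs.
From mathcomp Require Import all_boot all_order all_algebra.
From mathcomp Require Import ring lra zify.
Import Order.TTheory GRing.Theory Num.Theory.
Local Open Scope ring_scope.






Lemma up_chain (R : realFieldType) (f : nat -> R) lo m : (forall i, (lo <= i < m)%N -> f i <= f i.+1) ->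
  forall i, (lo <= i <= m)%N -> f lo <= f i.
Proof.
move=> H; elim=> [|i IH] /andP [h1 h2].
  by have -> : lo = 0%N by lia.
case: (ltnP lo i.+1) => h3.
  apply: le_trans (IH _) (H _ _); apply/andP; split; lia.
by have -> : lo = i.+1 by lia.
Qed.

Lemma down_chain (R : realFieldType) (f : nat -> R) m hi : (forall i, (m <= i < hi)%N -> f i.+1 <= f i) ->
  forall i, (m <= i <= hi)%N -> f hi <= f i.
Proof.
move=> H i hi'.
have [n hn] : exists n, (hi - i = n)%N by eexists.
elim: n i hi' hn => [|n IH] i hi' hn.
  by have -> : i = hi by lia.
apply: le_trans (IH i.+1 _ _) (H _ _); lia.
Qed.

Lemma peel (R : realFieldType) : forall n lo (f phi : nat -> R) m,
  (lo <= m <= lo + n)%N ->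
  (forall i, (lo <= i <= lo+n)%N -> 0 <= f i) ->
  (forall i, (lo <= i < m)%N -> f i <= f i.+1) ->
  (forall i, (m <= i < lo + n)%N -> f i.+1 <= f i) ->
  (forall a b, (lo <= a <= m)%N -> (m <= b <= lo + n)%N -> 0 <= \sum_(a <= i < b.+1) phi i) ->
  0 <= \sum_(lo <= i < (lo+n).+1) f i * phi i.
Proof.
elim=> [|n IH] lo f phi m hm hf hup hdn hphi.
  rewrite addn0 big_nat1.
  have em : m = lo by lia.
  have := hphi lo lo ltac:(lia) ltac:(lia); rewrite big_nat1 => hp.
  by apply: mulr_ge0 => //; apply: hf; lia.
set hi := (lo + n.+1)%N.
have Hup := @up_chain R f lo m hup.
have Hdn := @down_chain R f m hi hdn.
pose d := Num.min (f lo) (f hi).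
pose g := fun i => f i - d.
have hd0 : 0 <= d by rewrite le_min !hf //; lia.
have hsplit : \sum_(lo <= i < hi.+1) f i * phi i =
   \sum_(lo <= i < hi.+1) g i * phi i + d * \sum_(lo <= i < hi.+1) phi i.
  rewrite mulr_sumr -big_split /=; apply: eq_bigr => i _; rewrite /g; ring.
rewrite hsplit; apply: addr_ge0; last first.
  by apply: mulr_ge0 => //; apply: hphi; lia.
have hg : forall i, (lo <= i <= hi)%N -> 0 <= g i.
  move=> i hi'; rewrite /g subr_ge0.
  case: (leqP i m) => him.
    apply: le_trans (Hup i _); [by rewrite ge_min lexx | lia].
  apply: le_trans (Hdn i _); [by rewrite ge_min lexx orbT | lia].
have hgup : forall i, (lo <= i < m)%N -> g i <= g i.+1.
  by move=> i h; rewrite /g lerD2r; apply: hup.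
have hgdn : forall i, (m <= i < hi)%N -> g i.+1 <= g i.
  by move=> i h; rewrite /g lerD2r; apply: hdn.
have HA : (lo < m)%N -> f lo <= f hi -> 0 <= \sum_(lo <= i < hi.+1) g i * phi i.
  move=> h1 h2.
  have g0 : g lo = 0 by rewrite /g /d (min_l h2) subrr.
  rewrite big_ltn; last lia.
  rewrite g0 mul0r add0r.
  have -> : hi = (lo.+1 + n)%N by rewrite /hi; lia.
  apply: (IH _ _ _ m); try lia.
  - move=> i hi'; apply: hg; lia.
  - move=> i hi'; apply: hgup; lia.
  - move=> i hi'; apply: hgdn; lia.
  - move=> a b ha hb; apply: hphi; lia.
have HB : (m < hi)%N -> f hi <= f lo -> 0 <= \sum_(lo <= i < hi.+1) g i * phi i.
  move=> h1 h2.
  have g0 : g hi = 0 by rewrite /g /d (min_r h2) subrr.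
  rewrite big_nat_recr /=; last lia.
  rewrite g0 mul0r addr0.
  have -> : hi = (lo + n).+1 by rewrite /hi; lia.
  apply: (IH _ _ _ m); try lia.
  - move=> i hi'; apply: hg; lia.
  - move=> i hi'; apply: hgup; lia.
  - move=> i hi'; apply: hgdn; lia.
  - move=> a b ha hb; apply: hphi; lia.
case: (lerP (f lo) (f hi)) => hc.
  case: (ltnP lo m) => hlm; first exact: HA.
  apply: HB; first lia.
  have -> : lo = m by lia.
  apply: Hdn; lia.
case: (ltnP m hi) => hlm; first by apply: HB; [|apply: ltW].
have hlh : (lo < hi)%N by rewrite /hi; lia.
apply: HA; first lia.
apply: Hup; lia.
Qed.


Lemma sum_lin (R : realFieldType) (al be : R) a b : (a <= b)%N ->
  \sum_(a <= i < b) (al * i%:R + be) = (b - a)%:R * (al * (a%:R + b%:R - 1) / 2 + be).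
Proof.
move=> hab; have [n ->] : exists n, b = (a + n)%N by exists (b - a)%N; lia.
rewrite addKn; elim: n => [|n IH].
  by rewrite addn0 big_geq // mul0r.
rewrite addnS big_nat_recr /=; last lia.
by rewrite IH !natrD -addn1 !natrD; field.
Qed.

Lemma natle {R : realFieldType} {a b : nat} : (a <= b)%N -> (a%:R : R) <= b%:R.
Proof. by rewrite ler_nat. Qed.

Lemma int1 (R : realFieldType) (k a b m : nat) : (1 <= k)%N -> (k <= m.+1)%N ->
  (a <= m)%N -> (m <= b)%N ->
  0 <= \sum_(a <= i < b.+1) (2 * i%:R - (k%:R - 1) - (k%:R + 1) * (k <= i)%N%:R : R).
Proof.
move=> hk hkm ham hmb.
case: (ltnP b k) => hbk.
  rewrite (eq_big_nat _ _ (F2 := fun i => 2 * i%:R + (1 - k%:R))); last first.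
    move=> i hi; have -> : (k <= i)%N = false by lia.
    by rewrite mulr0 subr0 opprB addrA.
  rewrite sum_lin; last lia.
  have hbk' : k = b.+1 by lia.
  rewrite natrB; last lia.
  rewrite hbk' -addn1 natrD.
  have := natle (R:=R) ham; have := natle (R:=R) hmb; have := natle (R:=R) (leq0n a).
  nra.
case: (leqP k a) => hka.
  rewrite big_nat_cond; apply: sumr_ge0 => i /andP [/andP [h1 h2] _].
  have -> : (k <= i)%N by lia.
  rewrite /= mulr1n mulr1; have := natle (R:=R) (leq_trans hka h1); lra.
rewrite (big_cat_nat _ (n := k)) /=; [|lia|lia].
rewrite (eq_big_nat _ _ (F2 := fun i => 2 * i%:R + (1 - k%:R))); last first.
  move=> i hi; have -> : (k <= i)%N = false by lia.
  by rewrite mulr0 subr0 opprB addrA.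
rewrite [X in _ + X](eq_big_nat _ _ (F2 := fun i => 2 * i%:R + (- 2 * k%:R))); last first.
  move=> i hi; have -> : (k <= i)%N = true by lia.
  rewrite mulr1; ring.
rewrite !sum_lin; [|lia|lia].
rewrite !natrB; [|lia|lia].
rewrite -[b.+1]addn1 natrD.
have h1 := natle (R:=R) (ltnW hka); have h2 := natle (R:=R) hbk; have h3 := natle (R:=R) (leq0n a).
set A := a%:R in h1 h3 *; set K := k%:R in h1 h2 *; set Bb := b%:R in h2 *.
have -> : (K - A) * (2 * (A + K - 1) / 2 + (1 - K)) + (Bb + 1%:R - K) * (2 * (K + (Bb + 1%:R) - 1) / 2 + - 2 * K)
   = (K - A) * A + (Bb + 1 - K) * (Bb - K) by field.
have : 0 <= (K - A) * A by apply: mulr_ge0; lra.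
have : 0 <= (Bb + 1 - K) * (Bb - K) by apply: mulr_ge0; lra.
lra.
Qed.

Lemma int2 (R : realFieldType) (k a b m B : nat) (c : R) : (2 <= k)%N -> (m < k)%N ->
  (a <= m)%N -> (m <= b)%N -> (b <= B)%N ->
  (forall j : nat, (k <= j <= B)%N -> 2 * c * (j%:R - k%:R + 1) <= j%:R * (j%:R + 1)) ->
  0 <= \sum_(a <= i < b.+1) ((k%:R - 1) * (2 * i%:R - m%:R)
          - (2 * (k%:R - 1) * c - m%:R * (2 * c - k%:R - 1)) * (k <= i)%N%:R : R).
Proof.
move=> hk hmk ham hmb hbB Hc.
have h1 := natle (R:=R) ham; have h2 := natle (R:=R) hmb; have h3 := natle (R:=R) (leq0n a).
have h4 := natle (R:=R) hk.
case: (ltnP b k) => hbk.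
  rewrite (eq_big_nat _ _ (F2 := fun i => (2 * (k%:R - 1)) * i%:R + (- (k%:R - 1) * m%:R))); last first.
    move=> i hi; have -> : (k <= i)%N = false by lia.
    rewrite mulr0 subr0; ring.
  rewrite sum_lin; last lia.
  rewrite natrB; last lia.
  rewrite -[b.+1]addn1 natrD.
  set A := a%:R in h1 h3 *; set K := k%:R in h4 *; set Bb := b%:R in h2 *; set M := m%:R in h1 h2 *.
  have -> : (Bb + 1%:R - A) * (2 * (K - 1) * (A + (Bb + 1%:R) - 1) / 2 + - (K - 1) * M)
     = (Bb + 1 - A) * ((K - 1) * (A + Bb - M)) by field.
  apply: mulr_ge0; first lra.
  apply: mulr_ge0; lra.
have Hb := Hc b ltac:(lia).
rewrite (big_cat_nat _ (n := k)) /=; [|lia|lia].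
rewrite (eq_big_nat _ _ (F2 := fun i => (2 * (k%:R - 1)) * i%:R + (- (k%:R - 1) * m%:R))); last first.
  move=> i hi; have -> : (k <= i)%N = false by lia.
  rewrite mulr0 subr0; ring.
rewrite [X in _ + X](eq_big_nat _ _ (F2 := fun i => (2 * (k%:R - 1)) * i%:R +
    (- (k%:R - 1) * m%:R - (2 * (k%:R - 1) * c - m%:R * (2 * c - k%:R - 1))))); last first.
  move=> i hi; have -> : (k <= i)%N = true by lia.
  rewrite /= mulr1n mulr1; ring.
rewrite !sum_lin; [|lia|lia].
rewrite !natrB; [|lia|lia].
rewrite -[b.+1]addn1 natrD.
have h5 := natle (R:=R) hbk; have h6 := natle (R:=R) hmk.
move: Hb.
set A := a%:R in h1 h3 *; set K := k%:R in h4 h5 h6 *; set Bb := b%:R in h2 h5 *; set M := m%:R in h1 h2 h6 *.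
move=> Hb.
have -> : (K - A) * (2 * (K - 1) * (A + K - 1) / 2 + - (K - 1) * M) +
  (Bb + 1%:R - K) * (2 * (K - 1) * (K + (Bb + 1%:R) - 1) / 2 + (- (K - 1) * M - (2 * (K - 1) * c - M * (2 * c - K - 1))))
  = (K - 1) * A * (M + 1 - A) + ((K-1)*(Bb+1)*(Bb-M) - (2 * (K - 1) * c - M * (2 * c - K - 1))*(Bb+1-K)) by field.
have HV : (K - 1) * ((K-1)*(Bb+1)*(Bb-M) - (2 * (K - 1) * c - M * (2 * c - K - 1))*(Bb+1-K))
    = (K-1-M) * ((K-1)*(Bb*(Bb+1) - 2*c*(Bb+1-K))) + M * ((K-1)*(Bb+1-K)*(Bb-K)) by ring.
have : 0 <= (K-1-M) * ((K-1)*(Bb*(Bb+1) - 2*c*(Bb+1-K))).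
  apply: mulr_ge0; first lra.
  apply: mulr_ge0; lra.
have : 0 <= M * ((K-1)*(Bb+1-K)*(Bb-K)).
  apply: mulr_ge0; first lra.
  apply: mulr_ge0; [apply: mulr_ge0|]; lra.
move=> e1 e2.
have hK : 0 < K - 1 by have : (2%:R : R) <= K by []; lra.
have : 0 <= (K-1)*(Bb+1)*(Bb-M) - (2 * (K - 1) * c - M * (2 * c - K - 1))*(Bb+1-K).
  by rewrite -(pmulr_rge0 _ hK) HV; lra.
have : 0 <= (K - 1) * A * (M + 1 - A) by apply: mulr_ge0; [apply: mulr_ge0|]; lra.
lra.
Qed.

Lemma dich (R : realFieldType) (B k : nat) (f : nat -> R) (c : R) :
  (1 <= k <= B)%N ->
  (forall i, (i <= B)%N -> 0 <= f i) -> \sum_(i < B.+1) f i = 1 ->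
  (exists m : nat, (m <= B)%N /\
    (forall i, (i < m)%N -> f i <= f i.+1) /\
    (forall i, (m <= i)%N -> (i < B)%N -> f i.+1 <= f i)) ->
  (forall j : nat, (k <= j <= B)%N -> 2 * c * (j%:R - k%:R + 1) <= j%:R * (j%:R + 1)) ->
  (k%:R + 1) * (\sum_(i < B.+1 | (k <= i)%N) f i) + (k%:R - 1) <= 2 * (\sum_(i < B.+1) f i * i%:R)
  \/ c * (\sum_(i < B.+1 | (k <= i)%N) f i) <= \sum_(i < B.+1) f i * i%:R.
Proof.
move=> /andP [hk1 hkB] hf hS [m [hmB [hup hdn]]] Hc.
set P := \sum_(i < B.+1 | (k <= i)%N) f i.
set mu := \sum_(i < B.+1) f i * i%:R.
have EXP : forall (al be ga : R),
  \sum_(0 <= i < (0 + B).+1) f i * (al * i%:R + be + ga * (k <= i)%N%:R) = al * mu + be + ga * P.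
  move=> al be ga; rewrite add0n big_mkord.
  have -> : al * mu + be + ga * P = al * mu + be * \sum_(i < B.+1) f i + ga * P by rewrite hS mulr1.
  have -> : P = \sum_(i < B.+1) f i * (k <= i)%N%:R.
    rewrite /P big_mkcond /=; apply: eq_bigr => i _.
    by case: (k <= i)%N; rewrite /= ?mulr1n ?mulr0n ?mulr1 ?mulr0.
  rewrite /mu !mulr_sumr -!big_split /=; apply: eq_bigr => i _; ring.
have hpeel := fun phi => @peel R B 0 f phi m ltac:(lia) ltac:(move=> i hi; apply: hf; lia)
   ltac:(move=> i hi; apply: hup; lia) ltac:(move=> i hi; apply: hdn; lia).
case: (leqP k m.+1) => hkm.
  left.
  have := hpeel (fun i => 2 * i%:R - (k%:R - 1) - (k%:R + 1) * (k <= i)%N%:R).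
  move=> /(_ ltac:(move=> a b ha hb; apply: (@int1 R k a b m); lia)).
  have -> : \sum_(0 <= i < (0 + B).+1) f i * (2 * i%:R - (k%:R - 1) - (k%:R + 1) * (k <= i)%N%:R)
    = \sum_(0 <= i < (0 + B).+1) f i * (2 * i%:R + (- (k%:R - 1)) + (- (k%:R + 1)) * (k <= i)%N%:R).
    by apply: eq_bigr => i _; ring.
  rewrite EXP; lra.
have hk2 : (2 <= k)%N by lia.
have := hpeel (fun i => (k%:R - 1) * (2 * i%:R - m%:R)
          - (2 * (k%:R - 1) * c - m%:R * (2 * c - k%:R - 1)) * (k <= i)%N%:R).
move=> /(_ ltac:(move=> a b ha hb; apply: (@int2 R k a b m B c); lia || exact: Hc)).
have -> : \sum_(0 <= i < (0 + B).+1) f i * ((k%:R - 1) * (2 * i%:R - m%:R)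
          - (2 * (k%:R - 1) * c - m%:R * (2 * c - k%:R - 1)) * (k <= i)%N%:R)
    = \sum_(0 <= i < (0 + B).+1) f i * ((2 * (k%:R - 1)) * i%:R + (- (k%:R - 1) * m%:R)
          + (- (2 * (k%:R - 1) * c - m%:R * (2 * c - k%:R - 1))) * (k <= i)%N%:R).
  by apply: eq_bigr => i _; ring.
rewrite EXP => H.
case: (lerP ((k%:R + 1) * P + (k%:R - 1)) (2 * mu)) => h1; first by left.
right; case: (lerP (c * P) mu) => // h2; exfalso.
have hK : (m.+2%:R : R) <= k%:R by rewrite ler_nat.
have hM : 0 <= (m%:R : R) by [].
move: hK; rewrite -addn2 natrD => hK.
have e1 : (k%:R - 1 - m%:R) * (2 * mu) < (k%:R - 1 - m%:R) * (2 * (c * P)).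
  by rewrite ltr_pM2l; lra.
have e2 : m%:R * (2 * mu) <= m%:R * ((k%:R + 1) * P + (k%:R - 1)).
  by rewrite ler_wpM2l //; lra.
have E1 : (k%:R - 1 - m%:R) * (2 * mu) + m%:R * (2 * mu) = 2 * (k%:R - 1) * mu :> R by ring.
have E2 : (k%:R - 1 - m%:R) * (2 * (c * P)) + m%:R * ((k%:R + 1) * P + (k%:R - 1))
   = (2 * (k%:R - 1) * c - m%:R * (2 * c - k%:R - 1)) * P + m%:R * (k%:R - 1) :> R by ring.
lra.
Qed.






Lemma dneg (R : realFieldType) (b e : R) : 0 < b -> b <= 1 -> e <= 1 -> 1 + b < 2 * e ->
  - 2 * (e - 1 / 2) * (6 * e + 1) + (2 - 4 * e) * b + (4 * e - 1) ^+ 2 * (b ^+ 2) <= 0.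
Proof.
move=> hb hb1 he1 he.
pose x := e - (1+b)/2.
have hx : 0 <= x by rewrite /x; lra.
have hx2 : x <= (1-b)/2 by rewrite /x; lra.
have -> : - 2 * (e - 1 / 2) * (6 * e + 1) + (2 - 4 * e) * b + (4 * e - 1) ^+ 2 * (b ^+ 2)
   = - (4*b*(1+b)*(1-b^+2) + 8*(1+2*b)*(1-b^+2)*x + 4*(3-4*b^+2)*x^+2).
  by rewrite /x; field.
have h1 : 0 <= 4*b*(1+b)*(1-b^+2) by apply: mulr_ge0; timeout 20 nra.
have h3 : 0 <= (1-b) * x by timeout 20 nra.
have h4 : 0 <= b^+2 by timeout 20 nra.
case: (lerP 0 (3-4*b^+2)) => hA.
  have : 0 <= 8*(1+2*b)*(1-b^+2)*x by apply: mulr_ge0; [apply: mulr_ge0|]; timeout 20 nra.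
  have : 0 <= 4*(3-4*b^+2)*x^+2 by apply: mulr_ge0; timeout 20 nra.
  lra.
have : 4*(3-4*b^+2)*x^+2 >= 4*(3-4*b^+2)*x*((1-b)/2).
  have : x^+2 <= x * ((1-b)/2) by rewrite expr2; apply: ler_wpM2l.
  timeout 20 nra.
have : 0 <= x * ((1-b)*(8*(1+2*b)*(1+b) + 6 - 8*b^+2)) by apply: mulr_ge0 => //; apply: mulr_ge0; timeout 20 nra.
timeout 20 nra.
Qed.

Lemma dle (R : realFieldType) (b e : R) : 0 < b -> b <= 1 -> e <= 1 -> 1/3 < e ->
  - 2 * (e - 1 / 2) * (6 * e + 1) + (2 - 4 * e) * b + (4 * e - 1) ^+ 2 * (b ^+ 2) <= (1+b)^+2.
Proof.
move=> hb hb1 he1 he.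
have E : (1+b)^+2 - (- 2 * (e - 1 / 2) * (6 * e + 1) + (2 - 4 * e) * b + (4 * e - 1) ^+ 2 * (b ^+ 2)) = 4*e*((3*e-1) + b*(1 + 2*b - 4*e*b)).
  by field.
have h1 : 0 <= (1-e)*(b+2*b^+2/3) by apply: mulr_ge0; timeout 20 nra.
have h2 : 0 <= (e-1/3)*(2+b-2*b^+2) by apply: mulr_ge0; timeout 20 nra.
have h3 : 0 <= (3*e-1) + b*(1 + 2*b - 4*e*b) by timeout 20 nra.
have h4 : 0 <= 4*e*((3*e-1) + b*(1 + 2*b - 4*e*b)) by apply: mulr_ge0; lra.
lra.
Qed.

Lemma c3 (R : realFieldType) (b t e : R) : 0 < b -> b <= t -> t <= 1 -> 1 + b <= 2 * t -> e <= 1/3 -> 0 <= e ->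
  (1+b)*(2*e-t+b) <= 2*e*(1-t+b)*(t+b).
Proof.
move=> hb hbt ht1 ht2 he3 he0.
have h1 : 0 <= t^+2 - t + 1 - b^+2 by timeout 20 nra.
have h2 : 0 <= (2*t-1-b)*(2+b-t) by apply: mulr_ge0; lra.
timeout 20 nra.
Qed.

Lemma hlp_q {R : realFieldType} {e q x : R} : 0 < e -> 8*e*q = x -> 0 <= x -> 0 <= q.
Proof. move=> he <- hx. by rewrite -(pmulr_rge0 _ (_ : 0 < 8*e)) //; lra. Qed.
Lemma hlp_q2 {R : realFieldType} {e q x : R} : 0 < e -> 8*e*q = x -> x <= 0 -> q <= 0.
Proof. move=> he <- hx. by rewrite -(pmulr_rle0 _ (_ : 0 < 8*e)) //; lra. Qed.
Lemma hlp_sq (R : realFieldType) (r s : R) : 0 <= r -> r <= s -> r^+2 <= s^+2.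
Proof. move=> *; nra. Qed.
Lemma hlp_sq2 (R : realFieldType) (r s : R) : 0 <= s -> r^+2 <= s^+2 -> r <= s.
Proof. move=> *; nra. Qed.




Definition Qf {R : realFieldType} (b t e : R) := (2*e-t+b)*(1+b) - 2*e*(1-t+b)*(t+b).

Lemma cl1 {R : realFieldType} (b t e P : R) : 0 < b -> b <= t -> 0 <= P -> 2*t <= 3*e + b ->
  ((t+b)*P + t - b <= 2*e \/ (2*t-b)*P <= e) -> P <= (2*e - t + b)/(t+b).
Proof.
move=> hb hbt hP ht h12; rewrite ler_pdivlMr; last lra.
case: h12 => [h|h]; first lra.
have h1 : 0 <= (t-b)*(3*e+b - 2*t) by apply: mulr_ge0; lra.
have h2 : 0 < 2*t - b by lra.
suff : P*(t+b)*(2*t-b) <= (2*e-t+b)*(2*t-b) by rewrite ler_pM2r.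
nra.
Qed.

Lemma cl2 {R : realFieldType} (b t e P : R) : 0 < b -> b <= t -> 0 <= P ->
  0 <= (t-b)*(2*t - 3*e - b) ->
  ((t+b)*P + t - b <= 2*e \/ (2*t-b)*P <= e) -> P <= e/(2*t-b).
Proof.
move=> hb hbt hP hpos h12; rewrite ler_pdivlMr; last lra.
case: h12 => [h|h]; last lra.
have h2 : 0 < 2*t - b by lra.
have : (2*e-t+b)*(2*t-b) <= e*(t+b) by nra.
have : P*(t+b)*(2*t-b) <= (2*e-t+b)*(2*t-b) by rewrite ler_pM2r //; lra.
move=> h3 h4.
have : (P * (2*t-b)) * (t+b) <= e * (t+b) by rewrite mulrAC; lra.
by rewrite ler_pM2r //; lra.
Qed.

Lemma clQpos {R : realFieldType} (b t e P : R) : 0 < b -> 0 <= t -> 0 <= P -> 0 <= Qf b t e ->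
  ((t+b)*P + t - b <= 2*e \/ (1+b)*P <= 2*e*(1-t+b)) -> P <= (2*e - t + b)/(t+b).
Proof.
rewrite /Qf => hb ht hP hq h13; rewrite ler_pdivlMr; last lra.
case: h13 => [h|h]; first lra.
suff : P*(t+b)*(1+b) <= (2*e-t+b)*(1+b) by rewrite ler_pM2r //; lra.
have : (P*(1+b))*(t+b) <= 2*e*(1-t+b)*(t+b) by rewrite ler_pM2r //; lra.
rewrite mulrAC; lra.
Qed.

Lemma clQneg {R : realFieldType} (b t e P : R) : 0 < b -> 0 <= t -> 0 <= P -> Qf b t e <= 0 ->
  ((t+b)*P + t - b <= 2*e \/ (1+b)*P <= 2*e*(1-t+b)) -> P <= 2 * e * (1 - t + b)/(1+b).
Proof.
rewrite /Qf => hb ht hP hq h13; rewrite ler_pdivlMr; last lra.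
case: h13 => [h|h]; last lra.
suff : P*(1+b)*(t+b) <= 2*e*(1-t+b)*(t+b) by rewrite ler_pM2r //; lra.
have : P*(t+b)*(1+b) <= (2*e-t+b)*(1+b) by rewrite ler_pM2r //; lra.
rewrite mulrAC; lra.
Qed.

Lemma Qc3 {R : realFieldType} (b t e : R) : 0 < b -> b <= t -> t <= 1 -> 1 + b <= 2 * t -> e <= 1/3 -> 0 <= e ->
  0 <= 2*e - t + b -> Qf b t e <= 0.
Proof. rewrite /Qf => h1 h2 h3 h4 h5 h6 h7; have := @c3 R b t e h1 h2 h3 h4 h5 h6; lra. Qed.

Lemma QEQ {R : realFieldType} {b e d : R} (t : R) :
 d = - 2 * (e - 1 / 2) * (6 * e + 1) + (2 - 4 * e) * b + (4 * e - 1) ^+ 2 * (b ^+ 2) ->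
 8*e*Qf b t e = (1+b+2*e-4*e*t)^+2 - d.
Proof. by move=> ->; rewrite /Qf; field. Qed.

Lemma sq4 {R : rcfType} (b t e d : R) :
 d = - 2 * (e - 1 / 2) * (6 * e + 1) + (2 - 4 * e) * b + (4 * e - 1) ^+ 2 * (b ^+ 2) ->
 1/3 < e -> 0 < d -> t <= 1 / 2 + 1 / (4 * e) * (1 + b - Num.sqrt d) -> 0 <= Qf b t e.
Proof.
move=> hdd he hd htT.
have hr0 : 0 <= Num.sqrt d := sqrtr_ge0 _.
have hr2 : Num.sqrt d ^+ 2 = d by rewrite sqr_sqrtr // ltW.
move: hr0 hr2 htT; set r := Num.sqrt d => hr0 hr2 htT.
have ET : 4*e*(1 / 2 + 1 / (4 * e) * (1 + b - r)) = 2*e + 1 + b - r by field; lra.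
have he0 : 0 < 4 * e by lra.
have hs : r <= 1+b+2*e-4*e*t.
  have : 4*e*t <= 4*e*(1 / 2 + 1 / (4 * e) * (1 + b - r)) by rewrite ler_pM2l.
  lra.
have hx0 : 0 <= (1+b+2*e-4*e*t)^+2 - d by rewrite -hr2 subr_ge0; apply: hlp_sq.
apply: (hlp_q (e:=e) _ (QEQ t hdd) hx0); lra.
Qed.

Lemma sq5 {R : rcfType} (b t e d : R) :
 d = - 2 * (e - 1 / 2) * (6 * e + 1) + (2 - 4 * e) * b + (4 * e - 1) ^+ 2 * (b ^+ 2) ->
 0 < b -> b <= 1 -> e <= 1 -> t <= 1 ->
 1/3 < e -> 0 < d -> 1 / 2 + 1 / (4 * e) * (1 + b - Num.sqrt d) < t -> 1/2 < t /\ Qf b t e <= 0.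
Proof.
move=> hdd hb hb1 he1 ht1 he hd htT.
have hr0 : 0 <= Num.sqrt d := sqrtr_ge0 _.
have hr2 : Num.sqrt d ^+ 2 = d by rewrite sqr_sqrtr // ltW.
have hdle : d <= (1+b)^+2 by rewrite hdd; apply: dle.
move: hr0 hr2 htT; set r := Num.sqrt d => hr0 hr2 htT.
have hr1 : r <= 1 + b by apply: hlp_sq2; lra.
have ET : 4*e*(1 / 2 + 1 / (4 * e) * (1 + b - r)) = 2*e + 1 + b - r by field; lra.
have he0 : 0 < 4 * e by lra.
have hs : 1+b+2*e-4*e*t < r.
  have : 4*e*(1 / 2 + 1 / (4 * e) * (1 + b - r)) < 4*e*t by rewrite ltr_pM2l.
  lra.
split.
  have : 0 <= 1 / (4 * e) * (1 + b - r) by apply: mulr_ge0; [rewrite divr_ge0 //; lra | lra].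
  lra.
case: (lerP 0 (1+b-2*e)) => hc.
  have hs0 : 0 <= 1+b+2*e-4*e*t.
    have : e * t <= e * 1 by apply: ler_wpM2l; lra.
    lra.
  have h3 : (1+b+2*e-4*e*t)^+2 - d <= 0 by rewrite -hr2 subr_le0; apply: hlp_sq; lra.
  apply: (hlp_q2 (e:=e) _ (QEQ t hdd) h3); lra.
have : d <= 0 by rewrite hdd; apply: dneg => //; lra.
lra.
Qed.

Lemma sq6 {R : realFieldType} (b t e d : R) :
 d = - 2 * (e - 1 / 2) * (6 * e + 1) + (2 - 4 * e) * b + (4 * e - 1) ^+ 2 * (b ^+ 2) ->
 0 < e -> d <= 0 -> 0 <= Qf b t e.
Proof.
move=> hdd he hd.
have : 0 <= (1+b+2*e-4*e*t)^+2 by apply: sqr_ge0.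
move=> h; apply: (hlp_q he (QEQ t hdd)); lra.
Qed.

Lemma abstract_main (R : rcfType) (b t e P c d : R) :
 d = - 2 * (e - 1 / 2) * (6 * e + 1) + (2 - 4 * e) * b + (4 * e - 1) ^+ 2 * (b ^+ 2) ->
 0 < b -> b <= 1 -> 0 <= e -> e <= 1 -> 0 <= P -> P <= 1 -> 0 <= t -> t <= 1 ->
 c = b / 2 ->
 (t = 0 /\ P = 1) \/
 [/\ b <= t, t = b \/ 2*b <= t, (2*t <= 1 \/ 1 + b <= 2*t),
     ((t+b)*P + t - b <= 2*e \/ (2*t-b)*P <= e) &
     (1 + b <= 2*t -> (t+b)*P + t - b <= 2*e \/ (1+b)*P <= 2*e*(1-t+b))] ->
  (e <= 1 / 3 ->
     (e < t -> t <= Num.min (3 / 2 * e + c) (2 * e) ->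
        P <= (2 * e - t + b) / (t + b)) /\
     (Num.min (3 / 2 * e + c) (2 * e) < t -> t <= 1 / 2 ->
        P <= e / (2 * t - b)) /\
     (1 / 2 < t -> t <= 1 ->
        P <= 2 * e * (1 - t + b) / (1 + b))) /\
  (1 / 3 < e -> 0 < d ->
     (e < t -> t <= 1 / 2 + 1 / (4 * e) * (1 + b - Num.sqrt d) ->
        P <= (2 * e - t + b) / (t + b)) /\
     (1 / 2 + 1 / (4 * e) * (1 + b - Num.sqrt d) < t -> t <= 1 ->
        P <= 2 * e * (1 - t + b) / (1 + b))) /\
  (1 / 3 < e -> d <= 0 ->
     P <= (2 * e - t + b) / (t + b)).
Proof.
move=> hdd hb hb1 he0 he1 hP0 hP1 ht0 ht1 -> H.
split; [|split].
- move=> he3; split; [|split].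
  + move=> het; rewrite le_min => /andP [hm1 hm2].
    case: H => [[ht _]|[hbt _ _ h12 _]]; first lra.
    by apply: cl1 => //; lra.
  + move=> hm ht2.
    case: H => [[ht _]|[hbt htb _ h12 _]].
      by move: hm; rewrite ht gt_min; lra.
    apply: cl2 => //.
    move: hm; rewrite gt_min => /orP [hm|hm].
      by apply: mulr_ge0; lra.
    case: htb => [->|htb]; first by rewrite subrr mul0r.
    apply: mulr_ge0; lra.
  + move=> ht2 _.
    case: H => [[ht _]|[hbt htb h2 _ h13]]; first lra.
    have h2' : 1 + b <= 2 * t by case: h2; lra.
    case: (lerP 0 (2*e - t + b)) => hn.
      by apply: clQneg => //; [apply: Qc3 | exact: h13].
    rewrite ler_pdivlMr; last lra.
    case: (h13 h2') => h; last lra.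
    have : 0 <= (t+b)*P by apply: mulr_ge0; lra.
    lra.
- move=> he3 hd; split.
  + move=> het htT.
    have hQ := @sq4 R b t e d hdd he3 hd htT.
    case: H => [[ht _]|[hbt htb h2 h12 h13]]; first lra.
    case: h2 => h2; first by apply: cl1 => //; lra.
    by apply: clQpos => //; apply: h13.
  + move=> hTt ht1'.
    have [ht2 hQ] := @sq5 R b t e d hdd hb hb1 he1 ht1' he3 hd hTt.
    case: H => [[ht _]|[hbt htb h2 h12 h13]]; first lra.
    have h2' : 1 + b <= 2 * t by case: h2; lra.
    by apply: clQneg => //; apply: h13.
- move=> he3 hd.
  case: H => [[ht hP]|[hbt htb h2 h12 h13]].
    by rewrite ht hP ler_pdivlMr; lra.
  case: h2 => h2; first by apply: cl1 => //; lra.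
  apply: clQpos => //; last by apply: h13.
  apply: (@sq6 R b t e d hdd); lra.
Qed.



Theorem theorem3 (R : rcfType) (B : nat) (f : nat -> R) (k : nat) :
  (1 <= B)%N -> is_pmf B f -> unimodal B f -> (k <= B)%N ->
  let t : R := k%:R / B%:R in
  let b : R := 1 / B%:R in
  let eta : R := mean B f in
  let P : R := tail_prob B f k in
  let d : R := - 2 * (eta - 1 / 2) * (6 * eta + 1) + (2 - 4 * eta) / B%:R
               + (4 * eta - 1) ^+ 2 / (B%:R ^+ 2) in
  (eta <= 1 / 3 ->
     (eta < t -> t <= Num.min (3 / 2 * eta + 1 / (2 * B%:R)) (2 * eta) ->
        P <= (2 * eta - t + b) / (t + b)) /\
     (Num.min (3 / 2 * eta + 1 / (2 * B%:R)) (2 * eta) < t -> t <= 1 / 2 ->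
        P <= eta / (2 * t - b)) /\
     (1 / 2 < t -> t <= 1 ->
        P <= 2 * eta * (1 - t + b) / (1 + b))) /\
  (1 / 3 < eta -> 0 < d ->
     (eta < t -> t <= 1 / 2 + 1 / (4 * eta) * (1 + b - Num.sqrt d) ->
        P <= (2 * eta - t + b) / (t + b)) /\
     (1 / 2 + 1 / (4 * eta) * (1 + b - Num.sqrt d) < t -> t <= 1 ->
        P <= 2 * eta * (1 - t + b) / (1 + b))) /\
  (1 / 3 < eta -> d <= 0 ->
     P <= (2 * eta - t + b) / (t + b)).
Proof.
move=> hB [hf hS] hU hkB t b eta P d.
set mu := \sum_(i < B.+1) f i * i%:R.
have hX : 0 < (B%:R : R) by rewrite ltr0n.
have hX1 : 1 <= (B%:R : R) by rewrite ler1n.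
have hXn : (B%:R : R) != 0 by rewrite lt0r_neq0.
have hK := natle (R:=R) hkB.
have hK0 : 0 <= (k%:R : R) by [].
have Eeta : eta = mu / B%:R.
  rewrite /eta /mean /mu mulr_suml; apply: eq_bigr => i _; by rewrite mulrA.
have Et : t = k%:R / B%:R by [].
have Eb : b = 1 / B%:R by [].
have hmu0 : 0 <= mu by apply: sumr_ge0 => i _; apply: mulr_ge0 => //; apply: hf; rewrite -ltnS.
have hmu1 : mu <= B%:R.
  have -> : (B%:R : R) = \sum_(i < B.+1) f i * B%:R by rewrite -mulr_suml hS mul1r.
  apply: ler_sum => i _; apply: ler_wpM2l; first by apply: hf; rewrite -ltnS.
  by rewrite ler_nat -ltnS.
have hP0 : 0 <= P by apply: sumr_ge0 => i _; apply: hf; rewrite -ltnS.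
have hP1 : P <= 1.
  rewrite -hS /P /tail_prob big_mkcond /=; apply: ler_sum => i _.
  by case: (k <= i)%N => //; apply: hf; rewrite -ltnS.
have hdd : d = - 2 * (eta - 1 / 2) * (6 * eta + 1) + (2 - 4 * eta) * b + (4 * eta - 1) ^+ 2 * (b ^+ 2).
  by rewrite /d Eb; field.
apply: (@abstract_main R b t eta P (1 / (2 * B%:R)) d hdd).
- by rewrite Eb divr_gt0.
- by rewrite Eb ler_pdivrMr // mul1r.
- by rewrite Eeta divr_ge0.
- by rewrite Eeta ler_pdivrMr // mul1r.
- exact: hP0.
- exact: hP1.
- by rewrite Et divr_ge0.
- by rewrite Et ler_pdivrMr // mul1r.
- by rewrite Eb; field.
case: (posnP k) => hk0.
  left; split; first by rewrite Et hk0 mul0r.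
  by rewrite /P /tail_prob hk0 -hS; apply: eq_bigl.
right.
have hk1 : (1 <= k)%N := hk0.
have hkk : (1 <= k <= B)%N by rewrite hk1 hkB.
have hK1 := natle (R:=R) hk1.
have D1 := @dich R B k f (2 * k%:R - 1) hkk hf hS hU.
have D2 := @dich R B k f (B%:R * (B%:R + 1) / (2 * (B%:R - k%:R + 1))) hkk hf hS hU.
have tr1 : forall x y : R, x <= y -> x / B%:R <= y / B%:R.
  by move=> x y h; apply: ler_wpM2r => //; rewrite invr_ge0 ltW.
have F1 : (k%:R + 1) * P + (k%:R - 1) <= 2 * mu -> (t + b) * P + t - b <= 2 * eta.
  move=> h; have := tr1 _ _ h.
  have -> : ((k%:R + 1) * P + (k%:R - 1)) / B%:R = (t + b) * P + t - b by rewrite Et Eb; field.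
  by rewrite Eeta mulrA.
split.
- by rewrite Et Eb ler_pM2r ?invr_gt0 // mul1r.
- case: (ltnP k 2) => hk2; [left | right].
    by rewrite Et Eb (_ : k = 1%N) //; apply/eqP; rewrite eqn_leq -ltnS hk2 hk0.
  have := natle (R:=R) hk2; rewrite Et Eb => h.
  rewrite mulrA ler_pM2r ?invr_gt0 //; lra.
- case: (leqP (2 * k) B) => hk2; [left | right].
    have := natle (R:=R) hk2; rewrite natrM => h.
    rewrite Et mulrA ler_pdivrMr //; lra.
  have := natle (R:=R) hk2; rewrite natrM -addn1 natrD => h.
  rewrite Et Eb.
  have -> : 1 + 1 / B%:R = (B%:R + 1) / (B%:R : R) by field.
  rewrite mulrA ler_pM2r ?invr_gt0 //; lra.
- have Hc : forall j : nat, (k <= j <= B)%N ->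
      2 * (2 * k%:R - 1) * (j%:R - k%:R + 1) <= j%:R * (j%:R + 1) :> R.
    move=> j hj.
    have -> : 2 * (2 * k%:R - 1) * (j%:R - k%:R + 1) = j%:R * (j%:R + 1)
        - (j%:R - 2 * k%:R + 1) * (j%:R - 2 * k%:R + 2) :> R by ring.
    rewrite lerBlDr lerDl.
    case: (leqP (2 * k) j.+1) => hj2.
      have := natle (R:=R) hj2; rewrite natrM -addn1 natrD => h.
      apply: mulr_ge0; lra.
    have := natle (R:=R) hj2; rewrite natrM -addn2 natrD => h.
    apply: mulr_le0; lra.
  case: (D1 Hc) => h; first by left; apply: F1.
  right.
  have := tr1 _ _ h.
  have -> : (2 * k%:R - 1) * P / B%:R = (2 * t - b) * P by rewrite Et Eb; field.
  by rewrite Eeta.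
- move=> h2t.
  have hk2 : (B.+1 <= 2 * k)%N.
    have : (B%:R + 1) <= (2 * k%:R : R).
      move: h2t; rewrite Et Eb.
      have -> : 1 + 1 / B%:R = (B%:R + 1) / (B%:R : R) by field.
      by rewrite mulrA ler_pM2r ?invr_gt0.
    by move=> h; rewrite -(ler_nat R) -addn1 natrD natrM; lra.
  have hk2' := natle (R:=R) hk2; rewrite natrM -addn1 natrD in hk2'.
  have hU0 : 0 < B%:R - k%:R + 1 :> R by lra.
  have Hc : forall j : nat, (k <= j <= B)%N ->
      2 * (B%:R * (B%:R + 1) / (2 * (B%:R - k%:R + 1))) * (j%:R - k%:R + 1) <= j%:R * (j%:R + 1) :> R.
    move=> j /andP [hj1 hj2].
    have -> : 2 * (B%:R * (B%:R + 1) / (2 * (B%:R - k%:R + 1))) * (j%:R - k%:R + 1)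
       = B%:R * (B%:R + 1) * (j%:R - k%:R + 1) / (B%:R - k%:R + 1) :> R by field; lra.
    rewrite ler_pdivrMr //.
    have hJ1 := natle (R:=R) hj1.
    have -> : j%:R * (j%:R + 1) * (B%:R - k%:R + 1) = B%:R * (B%:R + 1) * (j%:R - k%:R + 1)
       + (B%:R - j%:R) * (k%:R * (k%:R - 1) - (j%:R - k%:R + 1) * (B%:R - k%:R + 1)) :> R by ring.
    rewrite lerDl.
    case: (ltnP j B) => hjB.
      have hJ2 := natle (R:=R) hjB; rewrite -addn1 natrD in hJ2.
      apply: mulr_ge0; first lra.
      rewrite subr_ge0.
      have : (j%:R - k%:R + 1) * (B%:R - k%:R + 1) <= (k%:R - 1) * (B%:R - k%:R + 1) :> R.
        by apply: ler_wpM2r; lra.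
      have : (k%:R - 1) * (B%:R - k%:R + 1) <= (k%:R - 1) * k%:R :> R.
        by apply: ler_wpM2l; lra.
      lra.
    have -> : j = B by apply/eqP; rewrite eqn_leq hj2 hjB.
    by rewrite subrr mul0r.
  case: (D2 Hc) => h; first by left; apply: F1.
  right.
  have h' : B%:R * (B%:R + 1) * P <= 2 * (B%:R - k%:R + 1) * mu :> R.
    have := ler_wpM2l (ltW (_ : 0 < 2 * (B%:R - k%:R + 1) :> R)) h.
    have -> : 2 * (B%:R - k%:R + 1) * (B%:R * (B%:R + 1) / (2 * (B%:R - k%:R + 1)) * P)
        = B%:R * (B%:R + 1) * P :> R by field; lra.
    by move=> H; apply: H; lra.
  have := tr1 _ _ (tr1 _ _ h').
  have -> : B%:R * (B%:R + 1) * P / B%:R / B%:R = (1 + b) * P by rewrite Eb; field.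
  have -> : 2 * (B%:R - k%:R + 1) * mu / B%:R / B%:R = 2 * eta * (1 - t + b) by rewrite Eeta Et Eb; field.
  done.
Qed.
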